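(* The function $f(A)=h(A)+c(A)$ on $2^V$ is non-decreasing and $\varepsilon$-approximately $\mathcal{C}$-submodular with $\varepsilon=1/L$, where $\mathcal{C}$ is the collection of all subsets $B\subseteq V$ inducing a connected subgraph; that is, for every $A\subseteq V$, every $B\in\mathcal{C}$ and every $x\in V\setminus B$, $$f(A\cup B\cup\{x\})-f(A\cup B)\le f(A\cup\{x\})-f(A)+\frac1L .$$
   Context: $G=(V,E,w)$ is a finite simple undirected graph with positive rational edge weights and no isolated vertices. $N_A(v)=N(v)\cap A$, $W_A(v)=\sum_{u\in N_A(v)}w_{(v,u)}$, $W(v)=W_V(v)$. $h(A)=\sum_{v\in V}h_A(v)$ with $h_A(v)=W(v)/2$ if $v\in A$ or $W_A(v)\ge W(v)/2$, and $h_A(v)=W_A(v)$ otherwise. $L=\max_v l(v)$, where $l(v)$ is the lcm of the denominators of the reduced fractions $W(v)/2$ and of the weights of edges incident to $v$. $p(A)$ is the number of connected components of the induced subgraph $G[A]$ ($p(\emptyset)=0$), $q(A)$ is the number of connected components of the spanning subgraph $(V,\{e\in E: e \text{ has at least one endpoint in } A\})$, and $c(A)=\frac1L\big(|V|-q(A)-p(A)\big)$. *)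

(* Defs.v *)
From mathcomp Require Import all_boot all_order all_algebra.
Set Implicit Arguments. Unset Strict Implicit. Unset Printing Implicit Defensive.
Import Order.TTheory GRing.Theory Num.Theory.
Local Open Scope ring_scope.

(* A finite simple undirected weighted graph on vertex type V:
   adjacency relation e (symmetric, irreflexive), weight function w
   (symmetric, positive on edges; values off edges are irrelevant),
   no isolated vertices. *)
Definition weighted_graph (V : finType) (e : rel V) (w : V -> V -> rat) : Prop :=
  [/\ forall x, ~~ e x x,
      forall x y, e x y = e y x,
      forall x y, e x y -> w x y = w y x,
      forall x y, e x y -> 0 < w x y
    & forall v, exists u, e v u].

Section Defs.
Variables (V : finType) (e : rel V) (w : V -> V -> rat).

Definition WA (A : {set V}) (v : V) : rat := \sum_(u in A | e v u) w v u.
Definition Wt (v : V) : rat := WA [set: V] v.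

Definition hA (A : {set V}) (v : V) : rat :=
  if (v \in A) || (Wt v / 2%:R <= WA A v) then Wt v / 2%:R else WA A v.
Definition h (A : {set V}) : rat := \sum_(v : V) hA A v.

Definition den (q : rat) : nat := `|denq q|%N.

Definition lv (v : V) : nat :=
  lcmn (den (Wt v / 2%:R)) (\big[lcmn/1%N]_(u | e v u) den (w v u)).
Definition LL : nat := \max_(v : V) lv v.

Definition induced (A : {set V}) : rel V :=
  fun x y => [&& x \in A, y \in A & e x y].
Definition touching (A : {set V}) : rel V :=
  fun x y => e x y && ((x \in A) || (y \in A)).

Definition p (A : {set V}) : nat :=
  #|[set [set y in A | connect (induced A) x y] | x in A]|.
Definition q (A : {set V}) : nat :=
  #|[set [set y | connect (touching A) x y] | x : V]|.

Definition c (A : {set V}) : rat :=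
  ((#|V|%:R - (q A)%:R - (p A)%:R) / (LL%:R)).

Definition f (A : {set V}) : rat := h A + c A.

Definition connected_set (B : {set V}) : bool :=
  (B != set0) && [forall x in B, forall y in B, connect (induced B) x y].

End Defs.

(* Main.v *)
Require Import Defs.
From mathcomp Require Import all_boot all_order all_algebra.
From mathcomp Require Import zify lra.
Import Order.TTheory GRing.Theory Num.Theory.
Set Implicit Arguments. Unset Strict Implicit. Unset Printing Implicit Defensive.

Section Comp.
Variable T : finType.
Definition cls (r : rel T) x := [set y | connect r x y].
Definition kappa (r : rel T) := #|[set cls r x | x : T]|.
Definition nb (r : rel T) (X : {set T}) := #|[set cls r x | x in X]|.
Definition addc (r : rel T) (X : {set T}) : rel T :=
  fun a b => r a b || (a \in X) && (b \in X).
Definition MM (r : rel T) (X : {set T}) z := [exists y in X, connect r z y].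

Lemma cls_eq r (hs : connect_sym r) x y : connect r x y -> cls r x = cls r y.
Proof.
move=> H; apply/setP=> z; rewrite !inE; apply/idP/idP => H2.
- by apply: connect_trans H2; rewrite hs.
- exact: connect_trans H2.
Qed.

Lemma connect_addc r X (hs : connect_sym r) a b :
  connect (addc r X) a b = connect r a b || (MM r X a && MM r X b).
Proof.
apply/idP/idP.
- move=> H.
  have Hc : closed (addc r X) [pred z | connect r a z || (MM r X a && MM r X z)].
    move=> z1 z2 /orP [Hr|/andP [H1 H2]].
    + rewrite !inE.
      have E1 : connect r a z1 = connect r a z2.
        apply/idP/idP=> Hz; first by apply: connect_trans Hz (connect1 Hr).
        by apply: connect_trans Hz _; rewrite hs connect1.
      have E2 : MM r X z1 = MM r X z2.
        apply/existsP/existsP => [] [y /andP [Hy Hc]]; exists y; rewrite Hy /=.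
        * by apply: connect_trans Hc; rewrite hs connect1.
        * exact: connect_trans (connect1 Hr) Hc.
      by rewrite E1 E2.
    + rewrite !inE.
      have M1 : MM r X z1 by apply/existsP; exists z1; rewrite H1 connect0.
      have M2 : MM r X z2 by apply/existsP; exists z2; rewrite H2 connect0.
      rewrite M1 M2 !andbT.
      have K : forall z, z \in X -> connect r a z -> MM r X a.
        by move=> z Hz Hz'; apply/existsP; exists z; rewrite Hz.
      apply/idP/idP => /orP [Hh|Hh] //; by [rewrite (K _ H1 Hh) orbT | rewrite (K _ H2 Hh) orbT | rewrite Hh orbT].
  have := closed_connect Hc H; rewrite !inE connect0 /= => <-.
  done.
- have Hsub : forall u v, connect r u v -> connect (addc r X) u v.
    by apply: connect_sub => u v Huv; apply: connect1; rewrite /addc Huv.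
  move=> /orP [Hr|/andP [/existsP [y1 /andP [Hy1 C1]] /existsP [y2 /andP [Hy2 C2]]]].
  + exact: Hsub.
  + apply: connect_trans (Hsub _ _ C1) _.
    apply: connect_trans (connect1 (_ : addc r X y1 y2)) _.
      by rewrite /addc Hy1 Hy2 orbT.
    by apply: Hsub; rewrite hs.
Qed.

Lemma kappa_addc r X (hs : connect_sym r) : X != set0 ->
  (kappa (addc r X) + nb r X = kappa r + 1)%N.
Proof.
move=> /set0Pn [x0 Hx0].
set U := [set z | MM r X z].
have clsE : forall a, cls (addc r X) a = if MM r X a then U else cls r a.
  move=> a; apply/setP => z; rewrite !inE connect_addc //.
  case Ha: (MM r X a) => /=; last by rewrite orbF inE.
  rewrite inE; apply/idP/idP => [/orP [Hc|//]|->]; last by rewrite orbT.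
  apply/existsP; case/existsP: Ha => y /andP [Hy Hc2]; exists y; rewrite Hy /=.
  by apply: connect_trans Hc2; rewrite hs.
have MclsQ : forall a, MM r X a = (cls r a \in [set cls r x | x in X]).
  move=> a; apply/existsP/imsetP => [[y /andP [Hy Hc]]|[y Hy Ey]].
  - by exists y => //; apply: cls_eq.
  - exists y; rewrite Hy /=; have : y \in cls r y by rewrite inE connect0.
    by rewrite -Ey inE.
have Pe : [set cls (addc r X) x | x : T] =
          U |: ([set cls r x | x : T] :\: [set cls r x | x in X]).
  apply/setP => C; rewrite !inE; apply/imsetP/idP.
  - move=> [a _ ->]; rewrite clsE; case Ha: (MM r X a); first by rewrite eqxx.
    apply/orP; right; rewrite -MclsQ Ha /=; apply/imsetP; by exists a.
  - move=> /orP [/eqP ->|/andP [HnQ /imsetP [a _ Ea]]].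
    + exists x0 => //; rewrite clsE.
      suff -> : MM r X x0 by [].
      by apply/existsP; exists x0; rewrite Hx0 connect0.
    + exists a => //; rewrite clsE Ea.
      by move: HnQ; rewrite Ea -MclsQ => /negbTE ->.
have UnP : U \notin [set cls r x | x : T] :\: [set cls r x | x in X].
  rewrite !inE negb_and negbK; apply/orP; case Hu: (U \in [set cls r x | x in X]); first by left.
  right; apply/imsetP => [[a _ Ea]].
  have : a \in U by rewrite Ea inE connect0.
  rewrite inE MclsQ -Ea Hu //.
have Qs : [set cls r x | x in X] \subset [set cls r x | x : T].
  by apply/subsetP => C /imsetP [a _ ->]; apply/imsetP; exists a.
rewrite /kappa /nb Pe cardsU1 UnP cardsD (setIidPr Qs) /=.
rewrite -addnA subnK; first by rewrite addnC.
exact: (subset_leq_card Qs).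
Qed.

Lemma nb_ge1 (r : rel T) (X : {set T}) : X != set0 -> (0 < nb r X)%N.
Proof.
move=> /set0Pn [x Hx]; rewrite /nb card_gt0; apply/set0Pn; exists (cls r x); exact: imset_f.
Qed.

Lemma nb_ge2 r (X : {set T}) y z : y \in X -> z \in X -> ~~ connect r y z -> (1 < nb r X)%N.
Proof.
move=> Hy Hz Hn; apply/card_gt1P; exists (cls r y), (cls r z); split; try exact: imset_f.
apply/eqP => E; move/negP: Hn; apply; have : z \in cls r z by rewrite inE connect0.
by rewrite -E inE.
Qed.

Lemma nb_subrel (r1 r2 : rel T) (X : {set T}) (h2 : connect_sym r2) :
  (forall a b, r1 a b -> r2 a b) -> (nb r2 X <= nb r1 X)%N.
Proof.
move=> Hs.
have Hc : forall a b, connect r1 a b -> connect r2 a b.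
  by apply: connect_sub => a b H; apply: connect1; apply: Hs.
rewrite /nb.
set g := fun C : {set T} => oapp (cls r2) C [pick y in X | cls r1 y == C].
suff -> : [set cls r2 x | x in X] = [set g C | C in [set cls r1 x | x in X]].
  exact: leq_imset_card.
apply/setP => D; apply/imsetP/imsetP.
- move=> [y Hy ->]; exists (cls r1 y); first exact: imset_f.
  rewrite /g; case: pickP => [y' /andP [Hy' /eqP E]|/(_ y)]; last by rewrite Hy eqxx.
  apply: cls_eq => //=; apply: Hc.
  have : y' \in cls r1 y' by rewrite inE connect0.
  by rewrite E inE.
- move=> [C /imsetP [y Hy ->] ->]; rewrite /g; case: pickP => [y' /andP [Hy' _]|Hn].
  + by exists y'.
  + by move: (Hn y); rewrite Hy eqxx.
Qed.

Lemma nb_subset (r : rel T) (X Y : {set T}) : X \subset Y -> (nb r X <= nb r Y)%N.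
Proof. by move=> H; apply: subset_leq_card; apply: imsetS. Qed.

Lemma nb_U (r : rel T) (X Y : {set T}) : (nb r (X :|: Y) <= nb r X + nb r Y)%N.
Proof. by rewrite /nb imsetU; apply: leq_card_setU. Qed.

Lemma nb_le1 (r : rel T) (X : {set T}) (hs : connect_sym r) :
  (forall y z, y \in X -> z \in X -> connect r y z) -> (nb r X <= 1)%N.
Proof.
move=> H; apply/card_le1_eqP => C D /imsetP [y Hy ->] /imsetP [z Hz ->].
first [exact: (cls_eq hs (H _ _ Hy Hz)) | exact: (esym (cls_eq hs (H _ _ Hy Hz)))].
Qed.

Lemma connect_noedge (r : rel T) x y : (forall z, ~~ r x z) -> connect r x y -> y = x.
Proof.
move=> H /connectP [[|z s] /= Hp ->] //.
by move: Hp => /andP [Hxz _]; move: (H z); rewrite Hxz.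
Qed.

End Comp.
Local Open Scope ring_scope.
Section G.
Variables (V : finType) (e : rel V) (w : V -> V -> rat).
Hypothesis hg : weighted_graph e w.
Implicit Types (S T A B : {set V}) (x a b u v : V).

Let esym x y : e x y = e y x. Proof. by case: hg => _ H _ _ _; apply: H. Qed.
Let eirr x : ~~ e x x. Proof. by case: hg => H _ _ _ _; apply: H. Qed.
Let wsym x y : e x y -> w x y = w y x. Proof. by case: hg => _ _ H _ _; apply: H. Qed.
Let wpos x y : e x y -> 0 < w x y. Proof. by case: hg => _ _ _ H _; apply: H. Qed.
Let enoiso v : exists u, e v u. Proof. by case: hg => _ _ _ _ H; apply: H. Qed.

Lemma touching_sym S : connect_sym (touching e S).
Proof. apply: sym_connect_sym => a b; by rewrite /touching esym orbC. Qed.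
Lemma induced_sym S : connect_sym (induced e S).
Proof.
apply: sym_connect_sym => a b; rewrite /induced esym.
by case: (a \in S); case: (b \in S).
Qed.

Lemma kappa_congr (r1 r2 : rel V) :
  (forall a b, connect r1 a b = connect r2 a b) -> kappa r1 = kappa r2.
Proof.
move=> H; have E : cls r1 =1 cls r2 by move=> x; apply/setP => y; rewrite !inE H.
by rewrite /kappa (eq_imset _ E).
Qed.

Definition XX x := x |: [set u | e x u].
Definition YY S x := x |: [set u in S | e x u].

Lemma E1 S x a b :
  connect (touching e (S :|: [set x])) a b = connect (addc (touching e S) (XX x)) a b.
Proof.
apply/idP/idP; apply: connect_sub => {a b} a b.
- rewrite /touching !inE => /andP [Hab /orP [/orP [Ha|/eqP Ha]|/orP [Hb|/eqP Hb]]];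
    apply: connect1; rewrite /addc /touching.
  + by rewrite Hab Ha.
  + by subst a; rewrite !inE eqxx Hab !orbT.
  + by rewrite Hab Hb orbT.
  + by subst b; rewrite !inE eqxx (esym x a) Hab !orbT.
- have Hx : forall u, u \in XX x -> connect (touching e (S :|: [set x])) x u.
    move=> u; rewrite !inE => /orP [/eqP ->|Hu]; first exact: connect0.
    by apply: connect1; rewrite /touching Hu !inE eqxx orbT.
  rewrite /addc => /orP [|/andP [Ha Hb]].
  + rewrite /touching => /andP [Hab H]; apply: connect1; rewrite /touching !inE Hab.
    by case/orP: H => ->; rewrite ?orbT.
  + apply: connect_trans (Hx _ Hb); rewrite touching_sym; exact: Hx.
Qed.

Lemma E2 S x a b :
  connect (induced e (S :|: [set x])) a b = connect (addc (induced e S) (YY S x)) a b.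
Proof.
apply/idP/idP; apply: connect_sub => {a b} a b.
- rewrite /induced !inE => /and3P [/orP [Ha|/eqP Ha] /orP [Hb|/eqP Hb] Hab];
    apply: connect1; rewrite /addc /induced.
  + by rewrite Ha Hb Hab.
  + by subst b; rewrite !inE eqxx (esym x a) Hab Ha !orbT.
  + by subst a; rewrite !inE eqxx Hab Hb !orbT.
  + by subst a b; move: Hab; rewrite (negbTE (eirr x)).
- have Hx : forall u, u \in YY S x -> connect (induced e (S :|: [set x])) x u.
    move=> u; rewrite !inE => /orP [/eqP ->|/andP [Hu Hxu]]; first exact: connect0.
    by apply: connect1; rewrite /induced !inE Hu Hxu eqxx !orbT.
  rewrite /addc => /orP [|/andP [Ha Hb]].
  + rewrite /induced => /and3P [Ha Hb Hab]; apply: connect1; rewrite /induced !inE.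
    by rewrite Ha Hb Hab.
  + apply: connect_trans (Hx _ Hb); rewrite induced_sym; exact: Hx.
Qed.

Lemma XX_n0 x : XX x != set0.
Proof. by apply/set0Pn; exists x; rewrite !inE eqxx. Qed.
Lemma YY_n0 S x : YY S x != set0.
Proof. by apply/set0Pn; exists x; rewrite !inE eqxx. Qed.

Lemma q_step S x : (q e (S :|: [set x]) + nb (touching e S) (XX x) = q e S + 1)%N.
Proof.
have -> : q e (S :|: [set x]) = kappa (addc (touching e S) (XX x)).
  exact: (kappa_congr (E1 S x)).
exact: (kappa_addc (touching_sym S) (XX_n0 x)).
Qed.

Lemma p_kappa S : (p e S + #|~: S| = kappa (induced e S))%N.
Proof.
set P1 := [set [set y in S | connect (induced e S) x y] | x in S].
set P2 := [set [set x] | x in ~: S].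
have cin : forall x, x \in S -> cls (induced e S) x = [set y in S | connect (induced e S) x y].
  move=> x Hx; apply/setP => y; rewrite !inE; apply/idP/idP => [H|/andP [_ ->]] //.
  rewrite H andbT.
  have Hc : closed (induced e S) S by move=> a b /and3P [-> -> _].
  by rewrite -(closed_connect Hc H).
have cout : forall x, x \notin S -> cls (induced e S) x = [set x].
  move=> x Hx; apply/setP => y; rewrite !inE; apply/idP/idP => [H|/eqP ->].
  - rewrite (@connect_noedge _ (induced e S) x y) //.
    by move=> z; rewrite /induced (negbTE Hx).
  - exact: connect0.
have Pe : [set cls (induced e S) x | x : V] = P1 :|: P2.
  apply/setP => C; rewrite inE; apply/imsetP/orP.
  - move=> [a _ ->]; case Ha: (a \in S).
    + by left; rewrite cin //; apply/imsetP; exists a.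
    + by right; rewrite cout ?Ha //; apply/imsetP; exists a; rewrite // inE Ha.
  - move=> [/imsetP [a Ha ->]|/imsetP [a Ha ->]]; exists a => //.
    + by rewrite cin.
    + by rewrite cout //; move: Ha; rewrite inE.
have Hd : P1 :&: P2 = set0.
  apply/setP => C; rewrite !inE; apply/negbTE; apply/negP => /andP [/imsetP [a Ha ->] /imsetP [b Hb Eb]].
  have : b \in [set y in S | connect (induced e S) a y] by rewrite Eb inE.
  by rewrite inE; move: Hb; rewrite inE => /negbTE ->.
have c2 : #|P2| = #|~: S| by rewrite /P2 card_imset //; exact: set1_inj.
rewrite /kappa Pe cardsU Hd cards0 subn0 c2.
by [].
Qed.

Lemma p_step S x : x \notin S ->
  (p e (S :|: [set x]) + nb (induced e S) (YY S x) = p e S + 2)%N.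
Proof.
move=> Hx.
have h1 := p_kappa (S :|: [set x]).
have h2 := p_kappa S.
have h3 : kappa (induced e (S :|: [set x])) = kappa (addc (induced e S) (YY S x)).
  exact: (kappa_congr (E2 S x)).
have h4 := kappa_addc (induced_sym S) (YY_n0 S x).
have h5 := cardsC S.
have h6 := cardsC (S :|: [set x]).
have h7 : #|S :|: [set x]| = #|S|.+1 by rewrite setUC cardsU1 Hx.
lia.
Qed.

Definition kk S := (q e S + p e S)%N.

Lemma k_step S x : x \notin S ->
  (kk (S :|: [set x]) + nb (touching e S) (XX x) + nb (induced e S) (YY S x) = kk S + 3)%N.
Proof. move=> Hx; have := q_step S x; have := p_step Hx; rewrite /kk; lia. Qed.

Lemma mono_step S x : x \notin S -> (kk (S :|: [set x]) <= kk S)%N.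
Proof.
move=> Hx; have := k_step Hx.
suff : (3 <= nb (touching e S) (XX x) + nb (induced e S) (YY S x))%N by lia.
case: (boolP [exists u, (u \in S) && e x u]).
- move=> /existsP [u /andP [Hu Hxu]].
  have := nb_ge1 (touching e S) (XX_n0 x).
  have : (1 < nb (induced e S) (YY S x))%N.
    apply: (@nb_ge2 _ _ _ x u); rewrite ?inE ?eqxx ?Hu ?Hxu ?orbT //.
    apply/negP => Hc.
    have Eu : u = x.
      by apply: (connect_noedge _ Hc) => z; rewrite /induced (negbTE Hx).
    by move: Hu; rewrite Eu (negbTE Hx).
  lia.
- move=> Hn.
  have := nb_ge1 (induced e S) (YY_n0 S x).
  have [u Hxu] := enoiso x.
  have : (1 < nb (touching e S) (XX x))%N.
    apply: (@nb_ge2 _ _ _ x u); rewrite ?inE ?eqxx ?Hxu ?orbT //.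
    apply/negP => Hc.
    have Eu : u = x.
      apply: (connect_noedge _ Hc) => z; rewrite /touching (negbTE Hx) /=.
      apply/negP => /andP [H1 H2].
      by move/negP: Hn; apply; apply/existsP; exists z; rewrite H1 H2.
    by move: Hxu; rewrite Eu (negbTE (eirr x)).
  lia.
Qed.

Lemma k_mono A B : A \subset B -> (kk B <= kk A)%N.
Proof.
move=> HAB; move Hn: #|B :\: A| => n; elim: n A HAB Hn => [|n IH] A HAB Hn.
- have : B :\: A = set0 by apply: cards0_eq.
  move/eqP; rewrite setD_eq0 => HBA.
  by have -> : B = A by apply/eqP; rewrite eqEsubset HBA HAB.
- have : B :\: A != set0 by apply/negP => /eqP H; move: Hn; rewrite H cards0.
  case/set0Pn => x; rewrite inE => /andP [HxA HxB].
  apply: leq_trans (mono_step HxA).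
  apply: IH.
  + by rewrite subUset HAB sub1set.
  + rewrite -setDDl; move: Hn; rewrite (cardsD1 x (B :\: A)) !inE HxA HxB /=.
    by case.
Qed.

Lemma k_sub A B x : connected_set e B -> x \notin B -> x \notin A ->
  (kk (A :|: [set x]) + kk (A :|: B) <= kk (A :|: B :|: [set x]) + kk A + 1)%N.
Proof.
move=> HB HxB HxA.
have HxAB : x \notin A :|: B by rewrite inE negb_or HxA HxB.
have h1 := k_step HxA.
have h2 := k_step HxAB.
have t1 : (nb (touching e (A :|: B)) (XX x) <= nb (touching e A) (XX x))%N.
  apply: nb_subrel; first exact: touching_sym.
  by move=> a b; rewrite /touching !inE => /andP [-> /orP [->|->]]; rewrite ?orbT.
have sAB : forall a b, induced e A a b -> induced e (A :|: B) a b.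
  by move=> a b; rewrite /induced !inE => /and3P [-> -> ->].
have t2 : (nb (induced e (A :|: B)) (YY A x) <= nb (induced e A) (YY A x))%N.
  by apply: nb_subrel => //; exact: induced_sym.
set Z := [set u in B | e x u].
have t3 : (nb (induced e (A :|: B)) Z <= 1)%N.
  apply: nb_le1; first exact: induced_sym.
  move: HB => /andP [_ /forallP HB] y z; rewrite !inE => /andP [Hy _] /andP [Hz _].
  have := HB y; rewrite Hy /= => /forallP /(_ z); rewrite Hz /= => Hc.
  apply: connect_sub Hc => a b Hab; apply: connect1.
  by move: Hab; rewrite /induced !inE => /and3P [-> -> ->]; rewrite !orbT.
have t4 : (nb (induced e (A :|: B)) (YY (A :|: B) x) <=
           nb (induced e (A :|: B)) (YY A x :|: Z))%N.
  apply: nb_subset; apply/subsetP => u; rewrite !inE.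
  by case: (u == x); case: (u \in A); case: (u \in B); case: (e x u).
have t5 := nb_U (induced e (A :|: B)) (YY A x) Z.
lia.
Qed.


Lemma WA_ge0 S v : 0 <= WA e w S v.
Proof. by apply: sumr_ge0 => u /andP [_ H]; apply: ltW; apply: wpos. Qed.

Lemma WA_mono S T v : S \subset T -> WA e w S v <= WA e w T v.
Proof.
move=> HST; rewrite /WA big_mkcond [X in _ <= X]big_mkcond /=; apply: ler_sum => u _.
case: (boolP (u \in S)) => HS; first by rewrite (subsetP HST _ HS).
case: (u \in T); case Hvu: (e v u) => //=; apply: ltW; exact: wpos.
Qed.

Lemma WA_U1 S x v : x \notin S ->
  WA e w (S :|: [set x]) v = WA e w S v + (if e v x then w v x else 0).
Proof. by move=> Hx; rewrite /WA !big_mkcondr /= setUC big_setU1 //= addrC. Qed.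

Lemma hA_in S v : v \in S -> hA e w S v = Wt e w v / 2%:R.
Proof. by rewrite /hA => ->. Qed.

Lemma hA_out S v : v \notin S ->
  (hA e w S v = Wt e w v / 2%:R /\ Wt e w v / 2%:R <= WA e w S v) \/
  (hA e w S v = WA e w S v /\ WA e w S v < Wt e w v / 2%:R).
Proof.
rewrite /hA => /negbTE -> /=; case: ifP => h; [left|right]; split => //.
by rewrite ltNge h.
Qed.

Lemma hA_le S v : hA e w S v <= Wt e w v / 2%:R.
Proof.
case: (boolP (v \in S)) => H; first by rewrite hA_in.
case: (hA_out H) => [[-> _]|[-> h]] //; exact: ltW.
Qed.

Lemma hA_mono S T v : S \subset T -> hA e w S v <= hA e w T v.
Proof.
move=> HST; case: (boolP (v \in T)) => HT; first by rewrite (hA_in HT) hA_le.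
have HS : v \notin S by apply/negP => H; move/negP: HT; apply; exact: (subsetP HST).
have := WA_mono v HST.
case: (hA_out HS) => [[-> h1]|[-> h1]]; case: (hA_out HT) => [[-> h2]|[-> h2]]; lra.
Qed.

Lemma hA_sub A S x v : A \subset S -> x \notin S -> x \notin A ->
  hA e w (S :|: [set x]) v - hA e w S v <= hA e w (A :|: [set x]) v - hA e w A v.
Proof.
move=> HAS HxS HxA.
case: (eqVneq v x) => [->|Hvx].
  rewrite (@hA_in (S :|: [set x]) x) ?(@hA_in (A :|: [set x]) x) ?inE ?eqxx ?orbT //.
  have := hA_mono x HAS; lra.
case: (boolP (v \in S)) => HvS.
  rewrite (@hA_in (S :|: [set x]) v) ?(@hA_in S v) ?inE ?HvS //.
  have := hA_mono v (subsetUl A [set x]); lra.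
have HvA : v \notin A by apply/negP => H; move/negP: HvS; apply; exact: (subsetP HAS).
have HvSx : v \notin S :|: [set x] by rewrite !inE negb_or HvS Hvx.
have HvAx : v \notin A :|: [set x] by rewrite !inE negb_or HvA Hvx.
have hd : 0 <= (if e v x then w v x else 0).
  by case Hvx': (e v x) => //; apply: ltW; apply: wpos.
have hm := WA_mono v HAS.
case: (hA_out HvSx); rewrite WA_U1 //; case: (hA_out HvAx); rewrite WA_U1 //;
case: (hA_out HvS); case: (hA_out HvA); move=> [-> ?] [-> ?] [-> ?] [-> ?]; lra.
Qed.

Lemma h_mono A B : A \subset B -> h e w A <= h e w B.
Proof. by move=> H; apply: ler_sum => v _; apply: hA_mono. Qed.

Lemma h_sub A S x : A \subset S -> x \notin S -> x \notin A ->
  h e w (S :|: [set x]) - h e w S <= h e w (A :|: [set x]) - h e w A.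
Proof. by move=> H1 H2 H3; rewrite /h -!sumrB; apply: ler_sum => v _; apply: hA_sub. Qed.

End G.

Theorem mainTheorem18 (V : finType) (e : rel V) (w : V -> V -> rat) :
  weighted_graph e w ->
  (forall A B : {set V}, A \subset B -> f e w A <= f e w B) /\
  (forall (A B : {set V}) (x : V), connected_set e B -> x \notin B ->
     f e w (A :|: B :|: [set x]) - f e w (A :|: B)
       <= f e w (A :|: [set x]) - f e w A + 1 / (LL e w)%:R).
Proof.
move=> hg.
have cE : forall S, c e w S = (#|V|%:R - (kk e S)%:R) * (LL e w)%:R^-1.
  by move=> S; rewrite /c /kk natrD opprD addrA.
have zge : 0 <= (LL e w)%:R^-1 :> rat by rewrite invr_ge0 ler0n.
split.
- move=> A B HAB; rewrite /f !cE.
  have hh := h_mono hg HAB.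
  have kle : (kk e B)%:R <= (kk e A)%:R :> rat by rewrite ler_nat; exact: (k_mono hg).
  have : (#|V|%:R - (kk e A)%:R) * (LL e w)%:R^-1 <= (#|V|%:R - (kk e B)%:R) * (LL e w)%:R^-1 :> rat.
    by apply: ler_wpM2r => //; lra.
  lra.
- move=> A B x HB HxB; case: (boolP (x \in A)) => HxA.
    have E1 : A :|: [set x] = A by apply/setUidPl; rewrite sub1set.
    have E2 : A :|: B :|: [set x] = A :|: B by apply/setUidPl; rewrite sub1set inE HxA.
    by rewrite E1 E2 !subrr add0r div1r.
  have HxAB : x \notin A :|: B by rewrite inE negb_or HxA HxB.
  have hs := h_sub hg (subsetUl A B) HxAB HxA.
  have ks := k_sub hg HB HxB HxA.
  have ks' : (kk e (A :|: [set x]))%:R + (kk e (A :|: B))%:R <=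
              (kk e (A :|: B :|: [set x]))%:R + (kk e A)%:R + 1%:R :> rat.
    by rewrite -!natrD ler_nat.
  rewrite /f !cE div1r.
  have : ((kk e (A :|: [set x]))%:R + (kk e (A :|: B))%:R - (kk e (A :|: B :|: [set x]))%:R
          - (kk e A)%:R - 1) * (LL e w)%:R^-1 <= 0 :> rat.
    by apply: mulr_le0_ge0 => //; lra.
  lra.
Qed.
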